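(* Let $m\in\mathbb Z$. Define $F=(f_{n,k})_{n,k\in\mathbb Z}$ by \[ f_{n,k}=x^ky^{-m-k-1}\,\binom{m+n}{n-k}_w\,y^{m+k+1}x^{-k}\prod_{i=1}^{n-k}W(i+k,-m-k-1)\quad(k\le n),\qquad f_{n,k}=0\ (k>n), \] and $G=(g_{k,l})_{k,l\in\mathbb Z}$ by $g_{k,l}=x^l\binom{-m-l-1}{k-l}_wx^{-l}$ for $l\le k$ and $g_{k,l}=0$ for $l>k$. Then $G$ is the inverse of $F$, i.e. $\sum_{k=l}^nf_{n,k}g_{k,l}=\delta_{n,l}$ for all $n,l\in\mathbb Z$ (the sum being $0$ when $n<l$).
   Context: Let $(w(s,t))_{s,t\in\mathbb Z}$ be commuting invertible variables and $\mathbb C_w[x,x^{-1},y,y^{-1}]$ the associative unital $\mathbb C$-algebra generated by $x^{\pm1},y^{\pm1}$ and the $w(s,t)^{\pm1}$ subject to $x^{-1}x=xx^{-1}=1$, $y^{-1}y=yy^{-1}=1$, $yx=w(1,1)xy$, $x\,w(s,t)=w(s+1,t)x$, $y\,w(s,t)=w(s,t+1)y$; thus conjugating an expression in the weights by monomials in $x,y$ shifts the weights, and $f_{n,k},g_{k,l}$ lie in $\mathbb C[(w(s,t))_{s,t\in\mathbb Z}]$. Product convention: $\prod_{j=l}^mA_j=A_l\cdots A_m$ if $m>l-1$, $1$ if $m=l-1$, $A_{l-1}^{-1}\cdots A_{m+1}^{-1}$ if $m<l-1$. $W(s,t)=\prod_{j=1}^tw(s,j)$. $\binom nk_w$ ($n,k\in\mathbb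 Z$) is the unique family with $\binom n0_w=\binom nn_w=1$ for all $n$ and $\binom{n+1}k_w=\binom nk_w+\binom n{k-1}_wW(k,n+1-k)$ whenever $(n+1,k)\ne(0,0)$. *)

(* Defs.v *)
From mathcomp Require Import all_boot all_algebra.
Set Implicit Arguments. Unset Strict Implicit. Unset Printing Implicit Defensive.
Import GRing.Theory Num.Theory.
Local Open Scope ring_scope.

(* Weights: a family v : int -> int -> R in a commutative ring R (the
   commutative subalgebra C[w(s,t)^{+-1}] generated by the weights). *)

(* W(s,t) = prod_{j=1}^t v(s,j), with the paper's product convention:
   for t < 0 it is v(s,0)^-1 v(s,-1)^-1 ... v(s,t+1)^-1. *)
Definition Wp (R : comUnitRingType) (v : int -> int -> R) (s t : int) : R :=
  match t with
  | Posz t' => \prod_(j < t') v s (j.+1)%:Z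
  | Negz t' => \prod_(j < t'.+1) (v s (- (j%:Z)))^-1
  end.

(* B is the family of weighted binomials binom(n,k)_v, n,k in Z
   (characterizing properties from the paper; the family is unique). *)
Definition is_wbinom (R : comUnitRingType) (v : int -> int -> R)
    (B : int -> int -> R) : Prop :=
  [/\ forall n : int, B n 0 = 1,
      forall n : int, B n n = 1
    & forall n k : int, (n + 1, k) <> (0, 0) ->
        B (n + 1) k = B n k + B n (k - 1) * Wp v k (n + 1 - k)].

(* Shift of the weights: conjugation x^a y^b P(w) y^-b x^-a = P(w(s+a,t+b)). *)
Definition shiftw (R : Type) (v : int -> int -> R) (a b : int) :=
  fun s t : int => v (s + a) (t + b).

Definition fmat (R : comUnitRingType) (Bin : (int -> int -> R) -> int -> int -> R)
    (w : int -> int -> R) (m n k : int) : R :=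
  if k <= n then
    Bin (shiftw w k (- m - k - 1)) (m + n) (n - k)
      * \prod_(i < `|n - k|%N) Wp w ((i.+1)%:Z + k) (- m - k - 1)
  else 0.

Definition gmat (R : comUnitRingType) (Bin : (int -> int -> R) -> int -> int -> R)
    (w : int -> int -> R) (m k l : int) : R :=
  if l <= k then Bin (shiftw w l 0) (- m - l - 1) (k - l) else 0.

Definition FG (R : comUnitRingType) (Bin : (int -> int -> R) -> int -> int -> R)
    (w : int -> int -> R) (m n l : int) : R :=
  if l <= n then
    \sum_(i < `|n - l|%N.+1) fmat Bin w m n (l + i%:Z) * gmat Bin w m (l + i%:Z) l
  else 0.

(* Main.v *)
Require Import Defs.
From mathcomp Require Import all_boot all_algebra.
From mathcomp Require Import zify ring.
From Stdlib Require Import FunctionalExtensionality.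
Import GRing.Theory Num.Theory.
Local Open Scope ring_scope.

Section S.
Variable R : comUnitRingType.
Implicit Types v : int -> int -> R.

Definition unitw v := forall s t, v s t \is a GRing.unit.

Lemma Wp0 v s : Wp v s 0 = 1.
Proof. by change (Wp v s (Posz 0) = 1); rewrite /Wp big_ord0. Qed.

Lemma WpS v (Hv : unitw v) s t : Wp v s (t + 1) = Wp v s t * v s (t + 1).
Proof.
case: t => n.
  have -> : Posz n + 1 = Posz n.+1 by rewrite -addn1 PoszD.
  by rewrite /Wp big_ord_recr.
case: n => [|n].
  have -> : Negz 0 + 1 = 0 by rewrite NegzE addNr.
  by rewrite Wp0 /Wp big_ord1 oppr0 mulVr.
have -> : Negz n.+1 + 1 = Negz n by rewrite !NegzE; lia.
by rewrite /Wp [in RHS]big_ord_recr /= NegzE divrK.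
Qed.

Lemma WpU v (Hv : unitw v) s t : Wp v s t \is a GRing.unit.
Proof.
case: t => n /=; apply: unitr_prod => i _ //.
by rewrite unitrV.
Qed.


Lemma int_const (T : Type) (f : int -> T) : (forall n, f (n + 1) = f n) -> forall n, f n = f 0.
Proof.
move=> Hf; elim/int_ind => // n IH.
  by rewrite intS addrC Hf.
by rewrite -IH -Hf; congr f; lia.
Qed.

Lemma eq_add_self (a y : R) : a = a + y -> y = 0.
Proof. by move=> H; apply: (@addrI _ a); rewrite addr0 -H. Qed.

Section B.
Variables (v : int -> int -> R) (Hv : unitw v) (B : int -> int -> R) (HB : is_wbinom v B).

Lemma B0 n : B n 0 = 1. Proof. by case: HB. Qed.
Lemma Bdiag n : B n n = 1. Proof. by case: HB. Qed.
Lemma Brec n k : (n, k) <> (0, 0) -> B n k = B (n - 1) k + B (n - 1) (k - 1) * Wp v k (n - k).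
Proof.
case: HB => _ _ H Hnk.
by rewrite -{1}(subrK 1 n) H (subrK 1 n).
Qed.

Lemma Bneg1 n : n != -1 -> B n (-1) = 0.
Proof.
move=> Hn.
have := Brec (n + 1) 0.
rewrite addrK !B0 sub0r => H.
have {}H : 1 = 1 + B n (-1) * Wp v 0 (n + 1 - 0).
  apply: H; case => H1; move: Hn; rewrite (_ : n = -1) //; lia.
move/eq_add_self: H => H.
apply: (@mulIr _ (Wp v 0 (n + 1 - 0))); first exact: WpU.
by rewrite /= H mul0r.
Qed.

Lemma Bsub n : n != 0 -> B (n - 1) n = 0.
Proof.
move=> Hn; have := Brec n n.
rewrite Bdiag subrr Wp0 Bdiag mulr1 => H.
have {}H : 1 = B (n - 1) n + 1 by apply: H; case => H1; move: Hn; rewrite H1.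
by apply: (@eq_add_self 1); rewrite addrC.
Qed.

Lemma Wpm1 s : Wp v s (-1) = (v s 0)^-1.
Proof.
have := WpS v Hv s (-1); rewrite addNr Wp0 => H.
by apply: (@mulIr _ (v s 0)); rewrite ?Hv // /= -H mulVr.
Qed.

Lemma Wp1 s : Wp v s 1 = v s 1.
Proof. by have := WpS v Hv s 0; rewrite add0r Wp0 mul1r. Qed.

Lemma Bm1_1 : B (-1) 1 = - (v 1 0)^-1.
Proof.
have B01 : B 0 1 = 0 by have := Bsub 1; rewrite subrr; apply.
have := Brec 0 1; rewrite sub0r subrr B0 B01 Wpm1 => H.
have {}H : 0 = B (-1) 1 + (v 1 0)^-1 by rewrite -[(v 1 0)^-1]mul1r; apply: H; case.
by apply/eqP; rewrite -subr_eq0 opprK H.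
Qed.

Lemma Bm1_m2 : B (-1) (-2) = - (v (-1) 1)^-1.
Proof.
have := Brec 0 (-1); rewrite sub0r Bneg1 // Bdiag.
rewrite (_ : 0 - -1 = 1) // Wp1 (_ : -1 - 1 = -2) // => H.
have {}H : 0 = 1 + B (-1) (-2) * v (-1) 1 by apply: H; case.
have H2 : B (-1) (-2) * v (-1) 1 = - 1 by apply/eqP; rewrite -addr_eq0 addrC H.
by apply: (@mulIr _ (v (-1) 1)); rewrite ?Hv //= H2 mulNr mulVr.
Qed.

Lemma Bzero (j i : nat) : (i < j)%N -> B i j = 0.
Proof.
elim: j i => [//|j IH] i Hi.
have H : forall e : nat, (e <= j)%N -> B (j - e)%N j.+1 = 0.
  elim=> [_|e IHe He].
    have := Bsub j.+1; rewrite subn0 (_ : (j.+1:int) - 1 = j); last lia.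
    by apply.
  have := Brec (j - e)%N j.+1.
  rewrite IHe ?(ltnW He) //.
  rewrite (_ : ((j - e)%N : int) - 1 = (j - e.+1)%N); last lia.
  rewrite (_ : (j.+1 : int) - 1 = j); last lia.
  rewrite IH; last lia.
  rewrite mul0r addr0 => H; symmetry; apply: H; case=> _; lia.
rewrite (_ : i = (j - (j - i))%N); last lia.
apply: H; lia.
Qed.

End B.
Arguments B0 {v B} HB n.
Arguments Bdiag {v B} HB n.
Arguments Bneg1 {v} Hv {B} HB {n}.
Arguments Bsub {v B} HB {n}.
Arguments Brec {v B} HB {n k}.
Arguments Bzero {v B} HB {j i}.
Arguments Bm1_1 {v} Hv {B} HB.
Arguments Bm1_m2 {v} Hv {B} HB.
Arguments Wp1 {v} Hv s.
Arguments Wpm1 {v} Hv s.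
Lemma wbinom_uniq v (Hv : unitw v) B1 B2 :
  is_wbinom v B1 -> is_wbinom v B2 -> forall n k, B1 n k = B2 n k.
Proof.
move=> H1 H2.
have pos : forall k : nat, forall n, B1 n k = B2 n k.
  elim=> [|k IH] n; first by rewrite (B0 H1) (B0 H2).
  pose f := fun n => B1 n k.+1 - B2 n k.+1.
  have Hf : forall n, f (n + 1) = f n.
    move=> z; rewrite /f.
    case: H1 => _ _ R1; case: H2 => _ _ R2.
    rewrite R1; last by case=> _; lia.
    rewrite R2; last by case=> _; lia.
    rewrite (_ : (k.+1:int) - 1 = k); last lia.
    rewrite IH; ring.
  have E1 := @int_const _ f Hf n; have E2 := @int_const _ f Hf k.+1.
  have : f n = 0 by rewrite E1 -E2 /f (Bdiag H1) (Bdiag H2) subrr.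
  by rewrite /f => /eqP; rewrite subr_eq0 => /eqP.
have neg : forall j : nat, forall n, B1 n (Negz j) = B2 n (Negz j).
  elim=> [|j IH] n.
    rewrite NegzE; case: (n =P -1) => [->|/eqP Hn].
      by rewrite (Bdiag H1) (Bdiag H2).
    by rewrite (Bneg1 Hv H1 Hn) (Bneg1 Hv H2 Hn).
  case: H1 => _ _ R1; case: H2 => _ _ R2.
  have E1 := R1 n (Negz j); have E2 := R2 n (Negz j).
  rewrite (_ : Negz j - 1 = Negz j.+1) in E1 E2; last by rewrite !NegzE; lia.
  have {}E1 := E1 ltac:(case=> _; rewrite NegzE; lia).
  have {}E2 := E2 ltac:(case=> _; rewrite NegzE; lia).
  apply: (@mulIr _ (Wp v (Negz j) (n + 1 - Negz j))); first exact: WpU.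
  rewrite /=.
  apply: (@addrI _ (B1 n (Negz j))); by rewrite -E1 !IH E2.
by move=> n; case=> k; [apply: pos|apply: neg].
Qed.

Lemma cancel_r (x a b : R) : x \is a GRing.unit -> a * x = b * x -> a = b.
Proof. by move=> Hx; apply: mulIr. Qed.

Lemma shift_unit v a b : unitw v -> unitw (shiftw v a b).
Proof. by move=> H s t; apply: H. Qed.
Arguments shift_unit {v} a b.

Lemma Wp_shift10 v a s t : Wp (shiftw v a 0) s t = Wp v (s + a) t.
Proof. by rewrite /Wp /shiftw; case: t => n; apply: eq_bigr => i _; rewrite addr0. Qed.

Lemma Wp01 v (Hv : unitw v) s t : Wp (shiftw v 0 1) s t * v s 1 = Wp v s (t + 1).
Proof.
have Hv' := shift_unit 0 1 Hv.
elim/int_ind: t => [|n IH|n IH].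
- by rewrite Wp0 add0r mul1r Wp1.
- rewrite intS addrC WpS // [in RHS]WpS // -IH /shiftw addr0.
  by rewrite mulrAC.
- apply: (@cancel_r (v s (- (n.+1)%:Z + 1 + 1))); first exact: Hv.
  have E : - (n.+1)%:Z + 1 = - n%:Z by lia.
  have E2 : Wp (shiftw v 0 1) s (- n%:Z) = Wp (shiftw v 0 1) s (-(n.+1)%:Z) * v s (-n%:Z + 1).
    by rewrite -E WpS // /shiftw addr0.
  rewrite -[in RHS]WpS // E -IH E2.
  by rewrite mulrAC.
Qed.

Definition Cw v k := Wp (fun s t => v t s) 1 k.

Lemma CwS v (Hv : unitw v) k : Cw v k = Cw v (k - 1) * v k 1.
Proof.
rewrite /Cw -{1}(subrK 1 k) WpS ?subrK // => s t; apply: Hv.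

Qed.

Section Main.
Variable Bin : (int -> int -> R) -> int -> int -> R.
Hypothesis HBin : forall v : int -> int -> R,
        (forall s t, v s t \is a GRing.unit) -> is_wbinom v (Bin v).

Definition Bp v n k := if (n == 0) && (k == 0) then 1 else
  Bin (shiftw v 1 0) (n - 1) (k - 1) + Bin (shiftw v 0 1) (n - 1) k * Cw v k.

Lemma Bp_gen v n k : (n, k) <> (0, 0) ->
  Bp v n k = Bin (shiftw v 1 0) (n - 1) (k - 1) + Bin (shiftw v 0 1) (n - 1) k * Cw v k.
Proof. by move=> H; rewrite /Bp; case: ifP => // /andP [/eqP H1 /eqP H2]; case: H; rewrite H1 H2. Qed.

Lemma Bp_wbinom v (Hv : unitw v) : is_wbinom v (Bp v).
Proof.
have H10 := HBin _ (shift_unit 1 0 Hv).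
have H01 := HBin _ (shift_unit 0 1 Hv).
have U10 := shift_unit 1 0 Hv.
have U01 := shift_unit 0 1 Hv.
split.
- move=> n; case: (n =P 0) => [->|Hn]; first by rewrite /Bp eqxx.
  rewrite Bp_gen; last by case.
  rewrite sub0r (Bneg1 U10 H10); last by apply/eqP; lia.
  by rewrite (B0 H01) /Cw Wp0 add0r mulr1.
- move=> n; case: (n =P 0) => [->|/eqP Hn]; first by rewrite /Bp eqxx.
  rewrite Bp_gen; last by case=> H; move: Hn; rewrite H.
  by rewrite (Bdiag H10) (Bsub H01 Hn) mul0r addr0.
move=> n k Hnk.
rewrite Bp_gen // addrK.
have B01 : forall v, unitw v -> Bin v 0 1 = 0.
  by move=> w Hw; have := Bsub (HBin _ Hw) (n:=1); rewrite subrr; apply.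
have gen : (n, k) <> (0, 0) -> (n, k - 1) <> (0, 0) ->
  Bin (shiftw v 1 0) n (k - 1) + Bin (shiftw v 0 1) n k * Cw v k =
  Bp v n k + Bp v n (k - 1) * Wp v k (n + 1 - k).
  move=> G1 G2; rewrite (@Bp_gen v _ _ G1) (@Bp_gen v _ _ G2).
  rewrite (Brec H10 G2) (Brec H01 G1) Wp_shift10 subrK.
  rewrite (_ : n - (k - 1) = n + 1 - k); last lia.
  rewrite (CwS v Hv k).
  have HW : Wp v k (n + 1 - k) = Wp (shiftw v 0 1) k (n - k) * v k 1.
    by rewrite Wp01 // (_ : n - k + 1 = n + 1 - k) //; lia.
  rewrite HW; ring.
case: (n =P 0) => [En|/eqP Hn].
  rewrite En; rewrite En in gen; case: (k =P 0) => [->|/eqP Hk0].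
    rewrite sub0r (Bneg1 U10 H10) // (B0 H01) /Cw Wp0 add0r mulr1.
    rewrite /Bp eqxx /= (Bm1_m2 U10 H10) (Bdiag H01) mul1r.
    by rewrite big_ord1 /shiftw addNr mul0r addr0.
  case: (k =P 1) => [->|/eqP Hk1].
    rewrite subrr (Bdiag H10) B01 // mul0r addr0.
    rewrite /Bp eqxx /= subrr sub0r (B0 H10) (Bm1_1 U01 H01) big_ord1 big_ord0 !mulr1 /shiftw addr0 add0r mulNr mulVr ?Hv //.
    by rewrite subrr add0r.
  by apply: gen; case=> H; lia.
by apply: gen; case=> H; lia.
Qed.

Lemma R2 v (Hv : unitw v) n k : (n, k) <> (0, 0) ->
  Bin v n k = Bin (shiftw v 1 0) (n - 1) (k - 1) + Bin (shiftw v 0 1) (n - 1) k * Cw v k.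
Proof.
move=> H.
by rewrite (@wbinom_uniq v Hv _ _ (HBin v Hv) (Bp_wbinom v Hv)) (@Bp_gen v _ _ H).
Qed.

Lemma shiftwE v a b c d : shiftw (shiftw v a b) c d = shiftw v (a + c) (b + d).
Proof.
apply: functional_extensionality => s; apply: functional_extensionality => t.
by rewrite /shiftw; congr v; ring.
Qed.

Variables (w : int -> int -> R) (Hw : unitw w).

Lemma Bw0 a b n : Bin (shiftw w a b) n 0 = 1.
Proof. exact: (B0 (HBin _ (shift_unit a b Hw))). Qed.

Lemma f_step m n k : fmat Bin w m n k =
  fmat Bin w (m - 1) n (k + 1) * Wp w (k + 1) (- m - (k + 1)) + fmat Bin w (m - 1) n k.
Proof.
rewrite /fmat.
case: (ltrgtP k n) => Hkn.
- rewrite (_ : k + 1 <= n = true); last by apply/idP; lia.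
  rewrite (@R2 _ (shift_unit k (-m-k-1) Hw)); last by case=> _; lia.
  rewrite !shiftwE.
  rewrite (_ : - m - k - 1 + 0 = - (m - 1) - (k + 1) - 1); last lia.
  rewrite (_ : - m - k - 1 + 1 = - (m - 1) - k - 1); last lia.
  rewrite (_ : k + 0 = k); last lia.
  rewrite (_ : m + n - 1 = m - 1 + n); last lia.
  rewrite (_ : n - k - 1 = n - (k + 1)); last lia.
  have Hd : n - k = (`|(n - k)%R|%N : int) by rewrite gez0_abs //; lia.
  have Hd' : `|(n - (k + 1))%R|%N = (`|(n - k)%R|%N).-1 by lia.
  rewrite Hd'.
  move: Hd; case: (`|(n - k)%R|%N) => [|d] Hd; first by lia.
  have HP : \prod_(i < d.+1) Wp w ((i.+1)%:Z + k) (- m - k - 1) =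
     Wp w (k + 1) (- m - (k + 1)) * \prod_(i < d) Wp w ((i.+1)%:Z + (k + 1)) (- (m - 1) - (k + 1) - 1).
    rewrite big_ord_recl (_ : (0%N.+1 : int) + k = k + 1); last lia.
    rewrite (_ : - m - k - 1 = - m - (k + 1)); last lia.
    congr (_ * _); apply: eq_bigr => i _.
    rewrite lift0; congr Wp; lia.
  have HC : Cw (shiftw w k (- m - k - 1)) (n - k) * \prod_(i < d.+1) Wp w ((i.+1)%:Z + k) (- m - k - 1) =
     \prod_(i < d.+1) Wp w ((i.+1)%:Z + k) (- (m - 1) - k - 1).
    rewrite Hd /Cw {1}/Wp -big_split /=; apply: eq_bigr => i _.
    rewrite (_ : - (m - 1) - k - 1 = - m - k - 1 + 1); last lia.
    by rewrite (WpS w Hw) /shiftw mulrC (addrC 1).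
  rewrite /= -HC HP; ring.
- rewrite (_ : k + 1 <= n = false); last by apply/idP; lia.
  by rewrite mul0r addr0.
- rewrite Hkn (_ : n + 1 <= n = false); last by apply/idP; lia.

  by rewrite !subrr /= !big_ord0 !Bw0 mul0r add0r.
Qed.

Lemma g_step m k l : gmat Bin w (m - 1) k l =
  gmat Bin w m k l + gmat Bin w m (k - 1) l * Wp w k (- m - k).
Proof.
rewrite /gmat.
case: (ltrgtP l k) => Hlk.
- rewrite (_ : l <= k - 1 = true); last by apply/idP; lia.
  case: (HBin _ (shift_unit l 0 Hw)) => _ _ H.
  have := H (- m - l - 1) (k - l) ltac:(case=> _; lia).
  rewrite (_ : - m - l - 1 + 1 = - (m - 1) - l - 1); last lia.
  rewrite (_ : k - l - 1 = k - 1 - l); last lia.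
  rewrite Wp_shift10 subrK (_ : - (m - 1) - l - 1 - (k - l) = - m - k) //; lia.
- rewrite (_ : l <= k - 1 = false); last by apply/idP; lia.
  by rewrite mul0r addr0.
- rewrite Hlk (_ : k <= k - 1 = false); last by apply/idP; lia.
  by rewrite subrr !Bw0 mul0r addr0.
Qed.

Lemma FG_step m n l : FG Bin w m n l = FG Bin w (m - 1) n l.
Proof.
rewrite /FG; case: ifP => // Hln.
have Hn : n = l + (`|(n - l)%R|%N)%:Z by lia.
move: Hn; move: (`|(n - l)%R|%N) => d Hn.
under eq_bigr => i _ do rewrite f_step mulrDl.
under [in RHS]eq_bigr => i _ do rewrite g_step mulrDr.
rewrite !big_split /= addrC; congr (_ + _).
rewrite big_ord_recr [in RHS]big_ord_recl /=.
have F0 : fmat Bin w (m - 1) n (l + d%:Z + 1) = 0.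
  by rewrite /fmat; case: ifP => // H; lia.
have G0 : gmat Bin w m (l + (0%N)%:Z - 1) l = 0.
  by rewrite /gmat; case: ifP => // H; lia.
rewrite F0 G0 !mul0r mulr0 addr0 add0r.
apply: eq_bigr => i _; rewrite /bump /= add1n.
rewrite (_ : l + (i.+1)%:Z = l + i%:Z + 1); last lia.
rewrite (_ : l + i%:Z + 1 - 1 = l + i%:Z); last lia.
ring.
Qed.

Lemma FG_base n l : l <= n -> FG Bin w (- n) n l = (n == l)%:R.
Proof.
move=> Hln; rewrite /FG Hln.
have Hn : n = l + (`|(n - l)%R|%N)%:Z by lia.
move: Hn; move: (`|(n - l)%R|%N) => d Hn.
rewrite big_ord_recr /= big1 ?add0r; last first.
  move=> i _; have Hi := ltn_ord i.
  rewrite /fmat (_ : l + (widen_ord (leqnSn d) i)%:Z <= n = true); last by apply/idP; rewrite /=; lia.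
  rewrite addNr /= (_ : n - (l + i%:Z) = ((d - i)%N : int)); last lia.
  rewrite (Bzero (HBin _ (shift_unit _ _ Hw)) (i := 0)); last lia.
  by rewrite !mul0r.
rewrite -Hn /fmat /gmat Hln.
rewrite (_ : n <= n = true); last by apply/idP; lia.
rewrite addNr subrr /= big_ord0 mulr1 Bw0 mul1r.
case: (n =P l) => [->|/eqP Hnl].
  by rewrite subrr Bw0.
rewrite (_ : - - n - l - 1 = (n - l) - 1); last lia.
by rewrite (Bsub (HBin _ (shift_unit _ _ Hw))) //; lia.
Qed.

Lemma FG_all m n l : FG Bin w m n l = (n == l)%:R.
Proof.
case: (boolP (l <= n)) => Hln; last first.
  rewrite /FG (negbTE Hln) (_ : (n == l) = false) //; apply/negbTE/eqP => E; move: Hln; rewrite E; lia.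
rewrite -(@FG_base n l Hln).
pose f := fun z => FG Bin w (z - n) n l.
have Hf : forall z, f (z + 1) = f z.
  move=> z; rewrite /f FG_step; congr FG; lia.
have := @int_const _ f Hf (m + n); rewrite /f addrK => ->.
by rewrite sub0r.
Qed.

End Main.

End S.

Theorem theorem9 (R : comUnitRingType)
    (Bin : (int -> int -> R) -> int -> int -> R)
    (HBin : forall v : int -> int -> R,
        (forall s t, v s t \is a GRing.unit) -> is_wbinom v (Bin v))
    (w : int -> int -> R) (Hw : forall s t, w s t \is a GRing.unit)
    (m : int) :
  forall n l : int, FG Bin w m n l = (n == l)%:R.
Proof.
move=> n l; exact: (@FG_all R Bin HBin w Hw m n l).
Qed.
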